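(* Let $F$ be the elementary cellular automaton with rule number 13, or the one with rule number 29. For every nonempty finite word $u\in\{0,1\}^*$, the deterministic communication complexity of $\textsc{SInv}_{F,u}$ restricted to inputs of length $n$ is bounded by a constant independent of $n$.
   Context: An elementary cellular automaton (ECA) with rule number $N\in\{0,\dots,255\}$ is the map $F:\{0,1\}^{\mathbb Z}\to\{0,1\}^{\mathbb Z}$ given by $F(x)_i=f(x_{i-1},x_i,x_{i+1})$. Here the local rule $f:\{0,1\}^3\to\{0,1\}$ is determined by $N=\sum_{a,b,c\in\{0,1\}}2^{4a+2b+c}f(a,b,c)$. For a nonempty finite word $u$, $p_u\in\{0,1\}^{\mathbb Z}$ is defined by $(p_u)_i=u_{i\bmod |u|}$. For a finite word $x$, $p_u[x]$ is the configuration equal to $x$ on positions $0,\dots,|x|-1$ and to $p_u$ elsewhere. $\textsc{SInv}_{F,u}$ is the decision problem: on input a finite word $x$, decide whether there is an integer $w$ such that for all $t\ge0$ the set of positions where $F^t(p_u)$ and $F^t(p_u[x])$ differ is contained in an interval of length $w$. For each $n$, it is regarded as a function $\{0,1\}^n\to\{0,1\}$. For a function $g:X\times Y\to Z$, $D(g)$ is the minimal depth of a deterministic two-party protocol computing $g$. In such a protocol, Alice knows $x$ and Bob knows $y$. The protocol is a binary tree: each internal node is labelled by a function of Alice's input only or of Bob's input only, with values in $\{\text{left},\text{right}\}$, and each leaf is labelled by an output value. For $g:\{0,1\}^m\to Z$, set $D(g)=\max_{0\le i<m}D(g_i)$, where $g_i:\{0,1\}^i\times\{0,1\}^{m-i}\to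 Z$ is $g_i(x,y)=g(xy)$. *)

(* Defs.v *)
From Stdlib Require Import ZArith ClassicalEpsilon.
From mathcomp Require Import all_boot.
Set Implicit Arguments. Unset Strict Implicit. Unset Printing Implicit Defensive.

Definition config := Z -> bool.

Definition eca_local (N : nat) (a b c : bool) : bool :=
  Nat.testbit N (4 * nat_of_bool a + 2 * nat_of_bool b + nat_of_bool c).

Definition eca (N : nat) (x : config) : config :=
  fun i => eca_local N (x (i - 1)%Z) (x i) (x (i + 1)%Z).

Definition eca_iter (N t : nat) (x : config) : config := iter t (eca N) x.

Definition periodic (u : seq bool) : config :=
  fun i => nth false u (Z.to_nat (Z.modulo i (Z.of_nat (size u)))).

Definition patch (u x : seq bool) : config :=
  fun i => if ((0 <=? i)%Z && (i <? Z.of_nat (size x))%Z)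
           then nth false x (Z.to_nat i) else periodic u i.

Definition SInv (N : nat) (u x : seq bool) : Prop :=
  exists w : Z, forall t : nat, exists a : Z, forall i : Z,
    eca_iter N t (periodic u) i <> eca_iter N t (patch u x) i ->
    (a <= i < a + w)%Z.

Definition SInv_b (N : nat) (u x : seq bool) : bool :=
  if excluded_middle_informative (SInv N u x) then true else false.

Inductive protocol (X Y Z : Type) : Type :=
| Leaf : Z -> protocol X Y Z
| NodeA : (X -> bool) -> protocol X Y Z -> protocol X Y Z -> protocol X Y Z
| NodeB : (Y -> bool) -> protocol X Y Z -> protocol X Y Z -> protocol X Y Z.
(* convention: function value true = left, false = right *)

Fixpoint run (X Y Z : Type) (P : protocol X Y Z) (x : X) (y : Y) : Z :=
  match P with
  | Leaf z => z
  | NodeA f l r => if f x then run l x y else run r x y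
  | NodeB f l r => if f y then run l x y else run r x y
  end.

Fixpoint depth (X Y Z : Type) (P : protocol X Y Z) : nat :=
  match P with
  | Leaf _ => 0
  | NodeA _ l r => (maxn (depth l) (depth r)).+1
  | NodeB _ l r => (maxn (depth l) (depth r)).+1
  end.

Definition CC_le (X Y Z : Type) (h : X -> Y -> Z) (d : nat) : Prop :=
  exists P : protocol X Y Z, depth P <= d /\ forall x y, run P x y = h x y.

(* For g : {0,1}^m -> Z (given as a function on words, used on words of
   length m), D(g) = max_{0<=i<m} D(g_i) with g_i(x,y) = g(xy). *)
Definition CC_len_le (Z : Type) (m : nat) (g : seq bool -> Z) (d : nat) : Prop :=
  forall i : nat, i < m ->
    CC_le (fun (x : i.-tuple bool) (y : (m - i).-tuple bool) => g (x ++ y)) d.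

(* Main.v *)
Require Import Defs.
From Stdlib Require Import ZArith Lia ClassicalEpsilon.
From mathcomp Require Import all_boot zify.
Set Implicit Arguments. Unset Strict Implicit. Unset Printing Implicit Defensive.

Lemma ecaE N (x : config) i : eca N x i = eca_local N (x (i-1)%Z) (x i) (x (i+1)%Z).
Proof. by []. Qed.

Lemma iterSE N t (x : config) : eca_iter N t.+1 x = eca N (eca_iter N t x).
Proof. by []. Qed.

Lemma f13 a b c : eca_local 13 a b c = ~~ a && (b || ~~ c).
Proof. by case: a; case: b; case: c; reflexivity. Qed.

Lemma f29 a b c : eca_local 29 a b c = (~~ a && (b || ~~ c)) || (a && ~~ b && ~~ c).
Proof. by case: a; case: b; case: c; reflexivity. Qed.

Lemma iter_ext N t (x y : config) : (forall i, x i = y i) ->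
  forall i, eca_iter N t x i = eca_iter N t y i.
Proof.
move=> H; elim: t => [|t IH] i; first exact: H.
by rewrite !iterSE !ecaE !IH.
Qed.

Lemma wall13 (x : config) j : x j = false -> x (j+1)%Z = true ->
  eca 13 x j = false /\ eca 13 x (j+1)%Z = true.
Proof.
move=> H0 H1; rewrite !ecaE !f13 Z.add_simpl_r H0 H1 /=.
by rewrite andbF.
Qed.

Lemma wall13_iter (x : config) j n : x j = false -> x (j+1)%Z = true ->
  eca_iter 13 n x j = false /\ eca_iter 13 n x (j+1)%Z = true.
Proof.
move=> H0 H1; elim: n => [|n [A B]]; first by []. rewrite !iterSE; exact: wall13.
Qed.

Lemma agree_step N (x y : config) a b :
  (forall i, (i < a \/ b <= i)%Z -> x i = y i) ->
  forall i, (i < a - 1 \/ b + 1 <= i)%Z -> eca N x i = eca N y i.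
Proof.
move=> H i Hi; rewrite !ecaE (H (i-1)%Z); last lia.
rewrite (H i); last lia. rewrite (H (i+1)%Z); last lia. done.
Qed.

Lemma agree_iter N (x y : config) a b :
  (forall i, (i < a \/ b <= i)%Z -> x i = y i) ->
  forall s i, (i < a - Z.of_nat s \/ b + Z.of_nat s <= i)%Z ->
    eca_iter N s x i = eca_iter N s y i.
Proof.
move=> H; elim => [|s IH] i Hi.
  by apply: H; lia.
rewrite !iterSE. apply: (agree_step N IH). lia.
Qed.

Lemma patch_agree u x i : (i < 0 \/ Z.of_nat (size x) <= i)%Z -> patch u x i = periodic u i.
Proof.
move=> Hi; rewrite /patch; case: ifP => // /andP [/Z.leb_le h1 /Z.ltb_lt h2]; lia.
Qed.

Lemma r29_id (x : config) i : eca 29 (eca 29 (eca 29 x)) i = eca 29 x i.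
Proof.
rewrite !ecaE !f29.
rewrite ?Z.sub_add ?Z.add_simpl_r.
move: (x (i-1-1-1)%Z) (x (i-1-1)%Z) (x (i-1)%Z) (x i) (x (i+1)%Z) (x (i+1+1)%Z) (x (i+1+1+1)%Z) => a b c d e f g.
by case: a; case: b; case: c; case: d; case: e; case: f; case: g.
Qed.

Lemma r29_iter t (y : config) i : eca_iter 29 t.+3 y i = eca_iter 29 t.+1 y i.
Proof. by rewrite !iterSE r29_id. Qed.

Lemma r29_small t : exists s, (s <= 2)%N /\ forall y i, eca_iter 29 t y i = eca_iter 29 s y i.
Proof.
pose P t := exists s, (s <= 2)%N /\ forall y i, eca_iter 29 t y i = eca_iter 29 s y i.
suff: P t /\ P t.+1 /\ P t.+2 by case.
elim: t => [|t [_ [H1 H2]]].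
  rewrite /P; split; first by exists 0; split.
  split.
    exists 1; split => //.
  exists 2; split => //.
split; first exact: H1. split; first exact: H2.
case: H1 => s [Hs E].
exists s; split => // y i; by rewrite r29_iter E.
Qed.

Lemma sinv29 u x : SInv 29 u x.
Proof.
exists (Z.of_nat (size x) + 4)%Z => t.
have [s [Hs E]] := r29_small t.
exists (-2)%Z => i Hd.
rewrite !E in Hd.
have Hs' : (Z.of_nat s <= 2)%Z by lia.
have Hag : forall j, (j < 0 \/ Z.of_nat (size x) <= j)%Z -> periodic u j = patch u x j.
  by move=> j Hj; rewrite patch_agree.
case: (Z.lt_ge_cases i (- Z.of_nat s)) => Hi1.
  by exfalso; apply: Hd; apply: (agree_iter 29 Hag); lia.
case: (Z.lt_ge_cases i (Z.of_nat (size x) + Z.of_nat s)) => Hi2; first lia.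
by exfalso; apply: Hd; apply: (agree_iter 29 Hag); lia.
Qed.

Lemma sinv_walls (p q : config) jL jR :
  p jL = false -> p (jL+1)%Z = true -> p jR = false -> p (jR+1)%Z = true ->
  (forall i, (i <= jL+1 \/ jR <= i)%Z -> p i = q i) ->
  exists w, forall t, exists a, forall i,
    eca_iter 13 t p i <> eca_iter 13 t q i -> (a <= i < a + w)%Z.
Proof.
move=> pL1 pL2 pR1 pR2 H.
have qL1 : q jL = false by rewrite -H //; lia.
have qL2 : q (jL+1)%Z = true by rewrite -H //; lia.
have qR1 : q jR = false by rewrite -H //; lia.
have qR2 : q (jR+1)%Z = true by rewrite -H //; lia.
have Hag : forall t i, (i <= jL+1 \/ jR <= i)%Z -> eca_iter 13 t p i = eca_iter 13 t q i.
  elim => [|t IH] i Hi; first exact: H.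
  case: (Z.lt_ge_cases i jL) => h1.
    by rewrite !iterSE !ecaE !IH //; lia.
  case: (Z.eq_dec i jL) => h2.
    by rewrite h2 (wall13_iter t.+1 pL1 pL2).1 (wall13_iter t.+1 qL1 qL2).1.
  case: (Z.eq_dec i (jL+1)) => h3.
    by rewrite h3 (wall13_iter t.+1 pL1 pL2).2 (wall13_iter t.+1 qL1 qL2).2.
  case: (Z.eq_dec i jR) => h4.
    by rewrite h4 (wall13_iter t.+1 pR1 pR2).1 (wall13_iter t.+1 qR1 qR2).1.
  by rewrite !iterSE !ecaE !IH //; lia.
exists (jR - jL)%Z => t; exists (jL + 2)%Z => i Hd.
case: (Z.le_gt_cases i (jL+1)) => h1; first by exfalso; apply: Hd; apply: Hag; lia.
case: (Z.le_gt_cases jR i) => h2; first by exfalso; apply: Hd; apply: Hag; lia.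
lia.
Qed.

Lemma periodic_shift u i m : periodic u (i + m * Z.of_nat (size u))%Z = periodic u i.
Proof. by rewrite /periodic Z_mod_plus_full. Qed.

Lemma periodic_nth u k : (k < size u)%N -> periodic u (Z.of_nat k) = nth false u k.
Proof. move=> Hk; rewrite /periodic Z.mod_small ?Nat2Z.id //; lia. Qed.

Lemma ex_transition (p : Z -> bool) n z : p z = false -> p (z + Z.of_nat n)%Z = true ->
  exists y, p y = false /\ p (y+1)%Z = true.
Proof.
elim: n z => [|n IH] z H0 H1.
  by move: H1; rewrite Z.add_0_r H0.
case E: (p (z+1)%Z); first by exists z.
apply: (IH (z+1)%Z) => //.
by have ->: (z + 1 + Z.of_nat n = z + Z.of_nat n.+1)%Z by lia.
Qed.

Lemma nonconst_sinv13 u x : u <> [::] -> ~~ all (pred1 (head false u)) u -> SInv 13 u x.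
Proof.
move=> hu /allPn [c Hc Hcb].
have Hs : (0 < size u)%N by rewrite lt0n size_eq0; apply/eqP.
set L := Z.of_nat (size u).
have HL : (1 <= L)%Z by rewrite /L; lia.
have P0 : periodic u 0%Z = head false u.
  by have := periodic_nth Hs; rewrite nth0.
have Pc : periodic u (Z.of_nat (index c u)) = c.
  by rewrite periodic_nth ?index_mem // nth_index.
have [z0 [z1 [Hz0 Hz1]]] : exists z0 z1, periodic u z0 = false /\ periodic u z1 = true.
  move: Hcb Pc; clear Hc; case: c; move: P0; case: (head false u) => P0 //= _ Pc.
    by exists 0%Z, (Z.of_nat (index true u)).
  by exists (Z.of_nat (index false u)), 0%Z.
pose m := (Z.abs (z0 - z1) + 1)%Z.
have Hz1' : periodic u (z1 + m * L)%Z = true by rewrite periodic_shift.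
have [y [Hy0 Hy1]] : exists y, periodic u y = false /\ periodic u (y+1)%Z = true.
  apply: (@ex_transition (periodic u) (Z.to_nat (z1 + m * L - z0)) z0 Hz0).
  have ->: (z0 + Z.of_nat (Z.to_nat (z1 + m * L - z0)) = z1 + m * L)%Z by rewrite /m; nia.
  exact: Hz1'.
pose mL := (- (Z.abs y + 2))%Z.
pose mR := (Z.abs y + Z.of_nat (size x))%Z.
apply: (sinv_walls (jL := (y + mL * L)%Z) (jR := (y + mR * L)%Z)).
- by rewrite periodic_shift.
- have ->: (y + mL * L + 1 = y + 1 + mL * L)%Z by lia.
  by rewrite periodic_shift.
- by rewrite periodic_shift.
- have ->: (y + mR * L + 1 = y + 1 + mR * L)%Z by lia.
  by rewrite periodic_shift.
- move=> i Hi; rewrite patch_agree //. rewrite /mL /mR in Hi; nia.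
Qed.

Lemma const_step13 (y : config) c : (forall i, y i = c) -> forall i, eca 13 y i = ~~ c.
Proof. by move=> H i; rewrite ecaE f13 !H; case: (c). Qed.

Lemma step2 (q : config) R : q R = true -> (forall i, (R < i)%Z -> q i = false) ->
  eca 13 (eca 13 q) (R+2)%Z = true /\
  (forall i, (R+2 < i)%Z -> eca 13 (eca 13 q) i = false) /\
  eca 13 (eca 13 q) (R+1)%Z = false.
Proof.
move=> HR Hq.
have h1 : eca 13 q (R+1)%Z = false.
  by rewrite ecaE f13 (_ : (R+1-1 = R)%Z) ?HR //; lia.
have h2 : forall i, (R+2 <= i)%Z -> eca 13 q i = true.
  move=> i Hi; rewrite ecaE f13 (Hq (i-1)%Z); last lia.
  rewrite (Hq i); last lia. by rewrite (Hq (i+1)%Z); last lia.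
split; last split.
- rewrite ecaE f13 (_ : (R+2-1 = R+1)%Z); last lia.
  by rewrite h1 (h2 (R+2)%Z) //; lia.
- move=> i Hi; rewrite ecaE f13 (h2 (i-1)%Z) //; lia.
- rewrite ecaE f13 h1 (_ : (R+1+1 = R+2)%Z); last lia.
  by rewrite (h2 (R+2)%Z) ?andbF //; lia.
Qed.

Lemma iterD13 n s (x : config) : eca_iter 13 (n + s) x = eca_iter 13 n (eca_iter 13 s x).
Proof. by rewrite /eca_iter iterD. Qed.

Lemma not_sinv13 (p q : config) t0 R :
  (forall i, eca_iter 13 t0 p i = false) -> eca_iter 13 t0 q R = true ->
  (forall i, (R < i)%Z -> eca_iter 13 t0 q i = false) ->
  ~ (exists w : Z, forall t : nat, exists a : Z, forall i : Z,
    eca_iter 13 t p i <> eca_iter 13 t q i -> (a <= i < a + w)%Z).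
Proof.
move=> Hp HqR Hq.
have Hk : forall k, (forall i, eca_iter 13 (t0 + 2*k) p i = false) /\
   eca_iter 13 (t0 + 2*k) q (R + 2 * Z.of_nat k)%Z = true /\
   (forall i, (R + 2 * Z.of_nat k < i)%Z -> eca_iter 13 (t0 + 2*k) q i = false).
  elim => [|k [IH1 [IH2 IH3]]].
    rewrite muln0 addn0 (_ : (R + 2 * Z.of_nat 0 = R)%Z) //; lia.
  have ->: (t0 + 2 * k.+1 = (t0 + 2 * k).+2)%N by lia.
  have [A [B C]] := step2 IH2 IH3.
  split; last split.
  - move=> i; rewrite !iterSE.
    have H1 : forall j, eca 13 (eca_iter 13 (t0+2*k) p) j = true := const_step13 IH1.
    exact: (const_step13 H1 i).
  - rewrite !iterSE (_ : (R + 2 * Z.of_nat k.+1 = R + 2 * Z.of_nat k + 2)%Z) //; lia.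
  - move=> i Hi; rewrite !iterSE; apply: B; lia.
have W : forall n, eca_iter 13 (n + t0.+2) q (R + 2)%Z = true.
  have [A [B C]] := step2 HqR Hq.
  move=> n; rewrite iterD13.
  have := (wall13_iter n (x := eca_iter 13 t0.+2 q) (j := (R+1)%Z)).
  rewrite (_ : (R + 1 + 1 = R + 2)%Z); last lia.
  case; first exact: C.
    exact: A.
  by [].
move=> [w Hw].
pose k := Z.to_nat w.
have [a Ha] := Hw (t0 + 2 * k.+1)%N.
have [P1 [P2 _]] := Hk k.+1.
have D1 : (a <= R + 2 < a + w)%Z.
  apply: Ha; rewrite P1.
  have ->: (t0 + 2 * k.+1 = 2 * k + t0.+2)%N by lia.
  by rewrite W.
have D2 : (a <= R + 2 * Z.of_nat k.+1 < a + w)%Z.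
  by apply: Ha; rewrite P1 P2.
rewrite /k in D2; lia.
Qed.

Lemma per_const u b : u <> [::] -> all (pred1 b) u -> forall i, periodic u i = b.
Proof.
move=> hu Hall i.
have Hs : (0 < size u)%N by rewrite lt0n size_eq0; apply/eqP.
have Hm := Z.mod_pos_bound i (Z.of_nat (size u)).
have Hlt : (Z.to_nat (i mod Z.of_nat (size u)) < size u)%N by lia.
by have /eqP := allP Hall _ (mem_nth false Hlt).
Qed.

Lemma last_diff b (x : seq bool) : ~~ all (pred1 b) x -> exists R, (R < size x)%N /\
  nth false x R = ~~ b /\ forall j, (R < j < size x)%N -> nth false x j = b.
Proof.
elim: x => [|c x IH] //=.
case Hx: (all (pred1 b) x) => /=; rewrite ?andbT => Hc.
  exists 0%N; split => //; split; first by move: Hc; case: c; case: (b).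
  case=> // j /= Hj; apply/eqP; apply: (allP Hx); exact: mem_nth.
have [R [H1 [H2 H3]]] := IH (negbT Hx).
exists R.+1; split => //; split => //.
case=> // j /= Hj; exact: H3.
Qed.

Lemma const_notsinv u x b : u <> [::] -> all (pred1 b) u -> ~~ all (pred1 b) x ->
  ~ SInv 13 u x.
Proof.
move=> hu Hu Hx.
have [R [H1 [H2 H3]]] := last_diff Hx.
have Pc := per_const hu Hu.
have Q0 : patch u x (Z.of_nat R) = ~~ b.
  rewrite /patch; case: ifP => [_|/negP []]; first by rewrite Nat2Z.id.
  by apply/andP; split; [apply/Z.leb_le | apply/Z.ltb_lt]; lia.
have Q1 : forall i, (Z.of_nat R < i)%Z -> patch u x i = b.
  move=> i Hi; case: (Z.lt_ge_cases i (Z.of_nat (size x))) => Hi2.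
    rewrite /patch; case: ifP => [_|/negP []].
      apply: H3; apply/andP; split; apply/ltP; first lia. set s := size x in Hi2 *. lia.
    apply/andP; split; [apply/Z.leb_le | apply/Z.ltb_lt; set s := size x in Hi2 *]; lia.
  by rewrite patch_agree ?Pc //; right.
rewrite /SInv.
case: b Hu Hx H2 H3 Pc Q0 Q1 => Hu Hx H2 H3 Pc Q0 Q1.
- apply: (not_sinv13 (t0 := 1%N) (R := (Z.of_nat R + 1)%Z)).
  + move=> i; rewrite iterSE; exact: (const_step13 Pc).
  + rewrite iterSE ecaE f13 Z.add_simpl_r; change (eca_iter 13 0 (patch u x)) with (patch u x); rewrite Q0 !Q1 //; lia.
  + move=> i Hi; rewrite iterSE ecaE f13; change (eca_iter 13 0 (patch u x)) with (patch u x); rewrite Q1 //; lia.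
- apply: (not_sinv13 (t0 := 0%N) (R := Z.of_nat R)) => //.
Qed.

Lemma const_sinv N u x b : u <> [::] -> all (pred1 b) u -> all (pred1 b) x -> SInv N u x.
Proof.
move=> hu Hu Hx.
have E : forall i, periodic u i = patch u x i.
  move=> i; rewrite /patch; case: ifP => // /andP [/Z.leb_le h1 /Z.ltb_lt h2].
  rewrite (per_const hu Hu); symmetry.
  have Hlt : (Z.to_nat i < size x)%N by set s := size x in h2 *; lia.
  by have /eqP := allP Hx _ (mem_nth false Hlt).
exists 0%Z => t; exists 0%Z => i Hd; exfalso; apply: Hd; exact: iter_ext.
Qed.

Lemma SInv_bT N u x : SInv N u x -> SInv_b N u x = true.
Proof. by rewrite /SInv_b; case: excluded_middle_informative. Qed.

Lemma SInv_bF N u x : ~ SInv N u x -> SInv_b N u x = false.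
Proof. by rewrite /SInv_b; case: excluded_middle_informative. Qed.

Unset Implicit Arguments.
Theorem mainTheorem5 (N : nat) (hN : N = 13 \/ N = 29)
  (u : seq bool) (hu : u <> [::]) :
  exists c : nat, forall n : nat, CC_len_le n (SInv_b N u) c.
Proof.
exists 2%N => n i Hi.
have Htrue : (forall s, SInv_b N u s = true) -> CC_le
    (fun (x : i.-tuple bool) (y : (n - i).-tuple bool) => SInv_b N u (x ++ y)) 2.
  move=> H; exists (Leaf _ _ true); split => // x y; by rewrite H.
case: hN => HN; last by apply: Htrue => s; rewrite HN; apply: SInv_bT; exact: sinv29.
case: (boolP (all (pred1 (head false u)) u)) => Hc; last first.
  by apply: Htrue => s; rewrite HN; apply: SInv_bT; exact: nonconst_sinv13.
set b := head false u in Hc.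
have E : forall s, SInv_b N u s = all (pred1 b) s.
  move=> s; case Hs: (all (pred1 b) s).
    by apply: SInv_bT; exact: const_sinv Hc Hs.
  by apply: SInv_bF; rewrite HN; apply: (const_notsinv hu Hc); exact: (negbT Hs).
exists (NodeA (fun x : i.-tuple bool => all (pred1 b) x)
          (NodeB (fun y : (n - i).-tuple bool => all (pred1 b) y)
             (Leaf _ _ true) (Leaf _ _ false))
          (Leaf _ _ false)).
split => // x y /=.
rewrite E all_cat.
by case: (all (pred1 b) x); case: (all (pred1 b) y).
Qed.
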